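(* Let $X$ be a topological space and $Y$ be a metrizable, connected and locally arcwise connected space. Then $\Sigma_0^{f*}(X,Y)\subseteq \mathrm{B}_1(X,Y)$.
   Context: Functionally closed/open sets: zero sets of continuous functions $X\to[0,1]$, resp. their complements. A family $(A_i:i\in I)$ of subsets of $X$ is strongly functionally discrete (sfd) if there is a discrete family $(U_i:i\in I)$ of functionally open sets with $\overline{A_i}\subseteq U_i$ for all $i$; $\sigma$-sfd means a countable union of sfd families. A family $\mathcal B$ is a base for $f:X\to Y$ if each $f^{-1}(V)$, $V\subseteq Y$ open, is a union of members of $\mathcal B$. $\Sigma^{f*}_0(X,Y)$: mappings $f:X\to Y$ having a $\sigma$-sfd base consisting of functionally closed subsets of $X$. $\mathrm{B}_1(X,Y)$: pointwise limits of sequences of continuous mappings $X\to Y$. *)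

(* Defs.v *)
From Stdlib Require Import Reals.
Open Scope R_scope.

Record topology (X : Type) := Topology {
  open : (X -> Prop) -> Prop;
  open_full : open (fun _ => True);
  open_inter : forall U V, open U -> open V -> open (fun x => U x /\ V x);
  open_union : forall F : (X -> Prop) -> Prop,
      (forall U, F U -> open U) -> open (fun x => exists U, F U /\ U x)
}.
Arguments open {X} t U.

Definition subset {X : Type} (A B : X -> Prop) : Prop := forall x, A x -> B x.

Definition closure {X : Type} (tX : topology X) (A : X -> Prop) : X -> Prop :=
  fun x => forall U, open tX U -> U x -> exists y, U y /\ A y.

Definition continuous {X Y : Type} (tX : topology X) (tY : topology Y)
  (f : X -> Y) : Prop :=
  forall V, open tY V -> open tX (fun x => V (f x)).

Definition continuous_R {X : Type} (tX : topology X) (g : X -> R) : Prop :=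
  forall x eps, 0 < eps ->
    exists U, open tX U /\ U x /\ forall y, U y -> Rabs (g y - g x) < eps.

Definition functionally_closed {X : Type} (tX : topology X) (A : X -> Prop) : Prop :=
  exists g : X -> R, continuous_R tX g /\ (forall x, 0 <= g x <= 1) /\
    (forall x, A x <-> g x = 0).

Definition functionally_open {X : Type} (tX : topology X) (U : X -> Prop) : Prop :=
  functionally_closed tX (fun x => ~ U x).

Definition discrete_family {X : Type} (tX : topology X) {I : Type}
  (U : I -> X -> Prop) : Prop :=
  forall x, exists W, open tX W /\ W x /\
    forall i j, (exists y, W y /\ U i y) -> (exists y, W y /\ U j y) -> i = j.

Definition sfd {X : Type} (tX : topology X) {I : Type} (A : I -> X -> Prop) : Prop :=
  exists U : I -> X -> Prop,
    (forall i, functionally_open tX (U i)) /\ discrete_family tX U /\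
    (forall i, subset (closure tX (A i)) (U i)).

Definition sigma_sfd {X : Type} (tX : topology X) {I : Type} (A : I -> X -> Prop) : Prop :=
  exists J : nat -> I -> Prop,
    (forall i, exists n, J n i) /\
    (forall n, sfd tX (fun p : {i : I | J n i} => A (proj1_sig p))).

Definition base_for {X Y : Type} (tY : topology Y) {I : Type}
  (A : I -> X -> Prop) (f : X -> Y) : Prop :=
  forall V, open tY V ->
    exists K : I -> Prop, forall x, V (f x) <-> exists i, K i /\ A i x.

Definition Sigma0fstar {X Y : Type} (tX : topology X) (tY : topology Y)
  (f : X -> Y) : Prop :=
  exists (I : Type) (A : I -> X -> Prop),
    (forall i, functionally_closed tX (A i)) /\ sigma_sfd tX A /\ base_for tY A f.

Definition Baire1 {X Y : Type} (tX : topology X) (tY : topology Y)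
  (f : X -> Y) : Prop :=
  exists fn : nat -> X -> Y,
    (forall n, continuous tX tY (fn n)) /\
    forall x V, open tY V -> V (f x) -> exists N, forall n, (N <= n)%nat -> V (fn n x).

Definition is_metric {Y : Type} (d : Y -> Y -> R) : Prop :=
  (forall x y, 0 <= d x y) /\ (forall x y, d x y = 0 <-> x = y) /\
  (forall x y, d x y = d y x) /\ (forall x y z, d x z <= d x y + d y z).

Definition metrizable {Y : Type} (tY : topology Y) : Prop :=
  exists d : Y -> Y -> R, is_metric d /\
    forall U, open tY U <->
      (forall y, U y -> exists eps, 0 < eps /\ forall z, d y z < eps -> U z).

Definition connected {Y : Type} (tY : topology Y) : Prop :=
  forall U V, open tY U -> open tY V ->
    (forall y, U y \/ V y) -> (forall y, ~ (U y /\ V y)) ->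
    (exists y, U y) -> (exists y, V y) -> False.

(* arc: continuous injective map of [0,1] into Y (Y Hausdorff here, so this is
   a homeomorphic embedding); continuity w.r.t. the subspace topology of [0,1] *)
Definition is_arc {Y : Type} (tY : topology Y) (g : R -> Y) : Prop :=
  (forall t, 0 <= t <= 1 -> forall V, open tY V -> V (g t) ->
     exists delta, 0 < delta /\
       forall s, 0 <= s <= 1 -> Rabs (s - t) < delta -> V (g s)) /\
  (forall s t, 0 <= s <= 1 -> 0 <= t <= 1 -> g s = g t -> s = t).

Definition arcwise_connected_set {Y : Type} (tY : topology Y) (V : Y -> Prop) : Prop :=
  forall a b, V a -> V b -> a <> b ->
    exists g : R -> Y, is_arc tY g /\ g 0 = a /\ g 1 = b /\
      forall t, 0 <= t <= 1 -> V (g t).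

Definition locally_arcwise_connected {Y : Type} (tY : topology Y) : Prop :=
  forall y U, open tY U -> U y ->
    exists V, open tY V /\ V y /\ subset V U /\ arcwise_connected_set tY V.

(* Main.v *)
Require Import Defs.
From Stdlib Require Import Reals.
From Stdlib Require Import Reals Lra Lia List Classical ClassicalEpsilon FunctionalExtensionality PropExtensionality.
Open Scope R_scope.

Lemma open_ext {X} (t : topology X) (P Q : X -> Prop) :
  open t P -> (forall x, P x <-> Q x) -> open t Q.
Proof.
  intros H E. assert (P = Q) as <-; auto.
  apply functional_extensionality; intro; apply propositional_extensionality; auto.
Qed.

Lemma open_local {X} (t : topology X) (P : X -> Prop) :
  (forall x, P x -> exists U, open t U /\ U x /\ forall z, U z -> P z) -> open t P.
Proof.
  intros H.
  apply (open_ext t (fun x => exists U, (fun U => open t U /\ forall z, U z -> P z) U /\ U x)).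
  - apply open_union. intros U [HU _]; exact HU.
  - intro x; split.
    + intros [U [[_ HU] Ux]]; auto.
    + intros Px. destruct (H x Px) as [U [? [? ?]]]. exists U; auto.
Qed.

Lemma fin_nbhd {X} (t : topology X) (x : X) (Q : nat -> (X -> Prop) -> Prop) (n : nat) :
  (forall k, (k < n)%nat -> exists U, open t U /\ U x /\ Q k U) ->
  exists W, open t W /\ W x /\ forall k, (k < n)%nat -> exists U, Q k U /\ forall z, W z -> U z.
Proof.
  induction n; intros H.
  - exists (fun _ => True). split; [apply open_full|]. split; auto. intros; lia.
  - destruct IHn as [W [HW [Wx HWQ]]]. { intros k Hk; apply H; lia. }
    destruct (H n ltac:(lia)) as [U [HU [Ux HQ]]].
    exists (fun z => W z /\ U z). split; [apply open_inter; auto|]. split; auto.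
    intros k Hk. destruct (Nat.eq_dec k n) as [->|Hne].
    + exists U; split; auto. intros z [_ ?]; auto.
    + destruct (HWQ k ltac:(lia)) as [U' [? HU']]. exists U'; split; auto.
      intros z [? _]; auto.
Qed.

Section RC.
Variable X : Type.
Variable tX : topology X.

Lemma cont_const c : continuous_R tX (fun _ => c).
Proof.
  intros x eps Heps. exists (fun _ => True). split; [apply open_full|]. split; auto.
  intros. rewrite Rminus_diag, Rabs_R0; auto.
Qed.

Lemma cont_lip (u : X -> R) (F : R -> R) (L : R) :
  continuous_R tX u -> 0 <= L -> (forall a b, Rabs (F a - F b) <= L * Rabs (a - b)) ->
  continuous_R tX (fun x => F (u x)).
Proof.
  intros Hu HL HF x eps Heps.
  destruct (Hu x (eps / (L + 1))) as [W [HW [Wx HWu]]].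
  { apply Rdiv_lt_0_compat; lra. }
  exists W; split; auto; split; auto. intros y Wy.
  eapply Rle_lt_trans; [apply HF|].
  specialize (HWu y Wy).
  apply Rle_lt_trans with ((L+1) * Rabs (u y - u x)).
  { apply Rmult_le_compat_r; [apply Rabs_pos|lra]. }
  apply Rlt_le_trans with ((L+1) * (eps / (L+1))).
  { apply Rmult_lt_compat_l; lra. }
  right; field; lra.
Qed.

Lemma cont_mul01 (u v : X -> R) :
  continuous_R tX u -> continuous_R tX v ->
  (forall x, 0 <= u x <= 1) -> (forall x, 0 <= v x <= 1) ->
  continuous_R tX (fun x => u x * v x).
Proof.
  intros Hu Hv Bu Bv x eps Heps.
  destruct (Hu x (eps/2)) as [W1 [HW1 [W1x H1]]]; [lra|].
  destruct (Hv x (eps/2)) as [W2 [HW2 [W2x H2]]]; [lra|].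
  exists (fun z => W1 z /\ W2 z). split; [apply open_inter; auto|]. split; auto.
  intros y [Y1 Y2]. specialize (H1 y Y1). specialize (H2 y Y2).
  pose proof (Bu x); pose proof (Bu y); pose proof (Bv x); pose proof (Bv y).
  replace (u y * v y - u x * v x) with ((u y - u x) * v y + u x * (v y - v x)) by ring.
  eapply Rle_lt_trans; [apply Rabs_triang|].
  rewrite !Rabs_mult.
  assert (Rabs (v y) <= 1) by (rewrite Rabs_pos_eq; lra).
  assert (Rabs (u x) <= 1) by (rewrite Rabs_pos_eq; lra).
  pose proof (Rabs_pos (u y - u x)); pose proof (Rabs_pos (v y - v x)).
  pose proof (Rabs_pos (v y)); pose proof (Rabs_pos (u x)).
  nra.
Qed.

Lemma cont_local (F : X -> R) :
  (forall x, exists W, open tX W /\ W x /\ exists G, continuous_R tX G /\ forall z, W z -> F z = G z) ->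
  continuous_R tX F.
Proof.
  intros H x eps Heps. destruct (H x) as [W [HW [Wx [G [HG HFG]]]]].
  destruct (HG x eps Heps) as [W' [HW' [W'x HW'G]]].
  exists (fun z => W z /\ W' z). split; [apply open_inter; auto|]. split; auto.
  intros y [Wy W'y]. rewrite (HFG y Wy), (HFG x Wx). auto.
Qed.

Lemma cont_at_nbhd (u : X -> R) x eps :
  continuous_R tX u -> 0 < eps -> exists W, open tX W /\ W x /\ forall y, W y -> Rabs (u y - u x) < eps.
Proof. intros Hu He. apply Hu; auto. Qed.
End RC.

Definition clamp (t : R) := Rmin 1 (Rmax 0 t).

Lemma clamp_lip a b : Rabs (clamp a - clamp b) <= 1 * Rabs (a - b).
Proof.
  unfold clamp, Rmin, Rmax.
  repeat (destruct Rle_dec); unfold Rabs; repeat destruct Rcase_abs; lra.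
Qed.

Lemma clamp_bounds t : 0 <= clamp t <= 1.
Proof. unfold clamp, Rmin, Rmax. repeat destruct Rle_dec; lra. Qed.

Lemma clamp_pos t : 0 < clamp t -> 0 < t.
Proof. unfold clamp, Rmin, Rmax. repeat destruct Rle_dec; lra. Qed.

Lemma clamp_one t : 1 <= t -> clamp t = 1.
Proof. unfold clamp, Rmin, Rmax. repeat destruct Rle_dec; lra. Qed.

Lemma clamp_zero t : t <= 0 -> clamp t = 0.
Proof. unfold clamp, Rmin, Rmax. repeat destruct Rle_dec; lra. Qed.

Lemma clamp_eq1 t : clamp t = 1 -> 1 <= t.
Proof. unfold clamp, Rmin, Rmax. repeat destruct Rle_dec; lra. Qed.

Lemma lip_affine (F : R -> R) (a c : R) :
  (forall t, F t = clamp (a * t + c)) -> forall x y, Rabs (F x - F y) <= Rabs a * Rabs (x - y).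
Proof.
  intros HF x y. rewrite !HF. eapply Rle_trans; [apply clamp_lip|].
  rewrite Rmult_1_l. replace (a * x + c - (a * y + c)) with (a * (x - y)) by ring.
  rewrite Rabs_mult; lra.
Qed.

Definition Rmp (N : nat) (t : R) := clamp (1 - INR N * (1 - t)).
Definition Ex (N : nat) (t : R) := clamp (INR N * (1 - t) - 2).
Definition Rd (e : nat) (t : R) :=
  clamp ((t - (1 - / (INR e + 1))) * ((INR e + 1) * (INR e + 2))).

Lemma Rmp_lip N : forall x y, Rabs (Rmp N x - Rmp N y) <= Rabs (INR N) * Rabs (x - y).
Proof. apply lip_affine with (c := 1 - INR N). intro; unfold Rmp; f_equal; ring. Qed.
Lemma Ex_lip N : forall x y, Rabs (Ex N x - Ex N y) <= Rabs (- INR N) * Rabs (x - y).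
Proof. apply lip_affine with (c := INR N - 2). intro; unfold Ex; f_equal; ring. Qed.
Lemma Rd_lip e : forall x y, Rabs (Rd e x - Rd e y) <=
  Rabs ((INR e + 1) * (INR e + 2)) * Rabs (x - y).
Proof.
  apply lip_affine with (c := - (1 - / (INR e + 1)) * ((INR e + 1) * (INR e + 2))).
  intro; unfold Rd; f_equal; ring.
Qed.

Lemma Rd_one e : Rd e 1 = 1.
Proof.
  unfold Rd. apply clamp_one. pose proof (pos_INR e).
  replace ((1 - (1 - / (INR e + 1))) * ((INR e + 1) * (INR e + 2))) with (INR e + 2).
  lra. field. lra.
Qed.

Lemma Rd_pos e t : 0 < Rd e t -> 1 - / (INR e + 1) < t.
Proof.
  unfold Rd; intro H. apply clamp_pos in H. pose proof (pos_INR e).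
  assert (0 < (INR e + 1) * (INR e + 2)) by nra.
  destruct (Rle_dec t (1 - / (INR e + 1))); [|lra].
  assert ((t - (1 - / (INR e + 1))) * ((INR e + 1) * (INR e + 2)) <= 0); [|lra].
  nra.
Qed.

Lemma Rd_nest e t : 0 < Rd (S e) t -> Rd e t = 1.
Proof.
  intro H. apply Rd_pos in H. rewrite S_INR in H. unfold Rd. apply clamp_one.
  pose proof (pos_INR e). set (a := INR e) in *.
  assert (H1 : t - (1 - / (a + 1)) > / (a + 1) - / (a + 1 + 1)) by lra.
  assert (Hp : 0 < (a + 1) * (a + 2)) by nra.
  apply Rle_trans with ((/ (a + 1) - / (a + 1 + 1)) * ((a + 1) * (a + 2))).
  - right; field; lra.
  - apply Rmult_le_compat_r; lra.
Qed.

Lemma Rd_pos0 e t : 0 < Rd e t -> 0 < t.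
Proof.
  intro H; apply Rd_pos in H. pose proof (pos_INR e).
  assert (/ (INR e + 1) <= 1); [|lra].
  rewrite <- Rinv_1. apply Rinv_le_contravar; lra.
Qed.

Section Paths.
Variable Y : Type.
Variable d : Y -> Y -> R.
Hypothesis Hd : is_metric d.

Lemma d_pos x y : 0 <= d x y. Proof. apply Hd. Qed.
Lemma d_refl x : d x x = 0. Proof. apply Hd; auto. Qed.
Lemma d_sym x y : d x y = d y x. Proof. apply Hd. Qed.
Lemma d_tri x y z : d x z <= d x y + d y z. Proof. apply Hd. Qed.

Definition ispath (g : R -> Y) := forall t, 0 <= t <= 1 -> forall eps, 0 < eps ->
  exists del, 0 < del /\ forall s, 0 <= s <= 1 -> Rabs (s - t) < del -> d (g t) (g s) < eps.

Lemma ispath_const a : ispath (fun _ => a).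
Proof. intros t Ht eps He. exists 1; split; [lra|]. intros. rewrite d_refl; auto. Qed.

Definition prev (g : R -> Y) := fun t => g (1 - t).
Lemma ispath_rev g : ispath g -> ispath (prev g).
Proof.
  intros Hg t Ht eps He. destruct (Hg (1 - t) ltac:(lra) eps He) as [del [Hdel H]].
  exists del; split; auto. intros s Hs Hst. unfold prev. apply H; [lra|].
  replace (1 - s - (1 - t)) with (- (s - t)) by ring. rewrite Rabs_Ropp; auto.
Qed.

Definition pconcat (g1 g2 : R -> Y) := fun t =>
  if Rle_dec t (1/2) then g1 (2 * t) else g2 (2 * t - 1).

Lemma pconcat_0 g1 g2 : pconcat g1 g2 0 = g1 0.
Proof. unfold pconcat. destruct Rle_dec; [f_equal; ring|lra]. Qed.
Lemma pconcat_1 g1 g2 : pconcat g1 g2 1 = g2 1.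
Proof. unfold pconcat. destruct Rle_dec; [lra|f_equal; ring]. Qed.

Lemma ispath_concat g1 g2 : ispath g1 -> ispath g2 -> g1 1 = g2 0 -> ispath (pconcat g1 g2).
Proof.
  intros H1 H2 E t Ht eps He.
  destruct (Rtotal_order t (1/2)) as [Hlt|[Heq|Hgt]].
  - destruct (H1 (2*t) ltac:(lra) eps He) as [d1 [Hd1 K1]].
    exists (Rmin (d1/2) (1/2 - t)). split; [apply Rmin_glb_lt; lra|].
    intros s Hs Hst. pose proof (Rmin_l (d1/2) (1/2 - t)). pose proof (Rmin_r (d1/2) (1/2 - t)).
    unfold Rabs in Hst; destruct Rcase_abs in Hst;
    unfold pconcat; destruct Rle_dec; destruct Rle_dec; try lra;
    apply K1; try lra; unfold Rabs; destruct Rcase_abs; lra.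
  - subst t. destruct (H1 1 ltac:(lra) eps He) as [d1 [Hd1 K1]].
    destruct (H2 0 ltac:(lra) eps He) as [d2 [Hd2 K2]].
    exists (Rmin d1 d2 / 2). split; [apply Rdiv_lt_0_compat; [apply Rmin_glb_lt|]; lra|].
    intros s Hs Hst. pose proof (Rmin_l d1 d2). pose proof (Rmin_r d1 d2).
    unfold pconcat; destruct Rle_dec as [_|]; [|lra].
    replace (2 * (1/2)) with 1 by field.
    destruct Rle_dec.
    + apply K1; [lra|]. unfold Rabs in *; repeat destruct Rcase_abs; lra.
    + rewrite E. apply K2; [lra|]. unfold Rabs in *; repeat destruct Rcase_abs; lra.
  - destruct (H2 (2*t - 1) ltac:(lra) eps He) as [d2 [Hd2 K2]].
    exists (Rmin (d2/2) (t - 1/2)). split; [apply Rmin_glb_lt; lra|].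
    intros s Hs Hst. pose proof (Rmin_l (d2/2) (t - 1/2)). pose proof (Rmin_r (d2/2) (t - 1/2)).
    unfold Rabs in Hst; destruct Rcase_abs in Hst;
    unfold pconcat; destruct Rle_dec; destruct Rle_dec; try lra;
    apply K2; try lra; unfold Rabs; destruct Rcase_abs; lra.
Qed.

Definition within (a : Y) (g : R -> Y) (r : R) := forall t, 0 <= t <= 1 -> d a (g t) <= r.

Definition optimal (a b : Y) (eta : R) (g : R -> Y) :=
  ispath g /\ g 0 = a /\ g 1 = b /\
  forall g' r, ispath g' -> g' 0 = a -> g' 1 = b -> within a g' r -> within a g (r + eta).

Lemma optimal_exists a b eta : 0 < eta -> (exists g, ispath g /\ g 0 = a /\ g 1 = b) ->
  exists g, optimal a b eta g.
Proof.
  intros Heta [g0 [Hg0 [Ea Eb]]].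
  destruct (classic (exists r g, ispath g /\ g 0 = a /\ g 1 = b /\ within a g r)) as [Hex|Hno].
  2:{ exists g0. repeat split; auto. intros g' r ? ? ? ?. exfalso; apply Hno; eauto 10. }
  set (E := fun u => exists r g, u = - r /\ ispath g /\ g 0 = a /\ g 1 = b /\ within a g r).
  assert (Hb : bound E).
  { exists 0. intros u [r [g [-> [_ [Ha [_ Hw]]]]]].
    specialize (Hw 0 ltac:(lra)). rewrite Ha, d_refl in Hw. lra. }
  assert (Hn : exists u, E u).
  { destruct Hex as [r [g Hg]]. exists (- r), r, g; auto. }
  destruct (completeness E Hb Hn) as [m [Hub Hlub]].
  assert (exists u, E u /\ m - eta < u) as [u [[r [g [-> [Hg [Ha [Hbb Hw]]]]]] Hu]].
  { apply NNPP; intro Hc. assert (m <= m - eta); [|lra].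
    apply Hlub. intros u Eu. destruct (Rle_dec u (m - eta)); auto.
    exfalso; apply Hc; exists u; split; auto; lra. }
  exists g. repeat split; auto.
  intros g' r' Hg' Ha' Hb' Hw' t Ht.
  assert (- r' <= m) by (apply Hub; exists r', g'; auto).
  specialize (Hw t Ht). lra.
Qed.

Definition optpath (a b : Y) (eta : R) : R -> Y :=
  match excluded_middle_informative (exists g, optimal a b eta g) with
  | left H => proj1_sig (constructive_indefinite_description _ H)
  | right _ => fun _ => a
  end.

Lemma optpath_spec a b eta : 0 < eta -> (exists g, ispath g /\ g 0 = a /\ g 1 = b) ->
  optimal a b eta (optpath a b eta).
Proof.
  intros He Hp. unfold optpath. destruct excluded_middle_informative as [H|H].
  - exact (proj2_sig (constructive_indefinite_description _ H)).
  - exfalso; apply H, optimal_exists; auto.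
Qed.

Variable tY : topology Y.
Hypothesis HdY : forall U, open tY U <->
      (forall y, U y -> exists eps, 0 < eps /\ forall z, d y z < eps -> U z).

Lemma ball_open y r : open tY (fun z => d y z < r).
Proof.
  apply HdY. intros z Hz. exists (r - d y z). split; [lra|].
  intros w Hw. pose proof (d_tri y z w). lra.
Qed.

Lemma arc_path g : is_arc tY g -> ispath g.
Proof.
  intros [Hc _] t Ht eps He.
  destruct (Hc t Ht (fun z => d (g t) z < eps) (ball_open _ _)) as [del [Hdel H]].
  { rewrite d_refl; auto. }
  exists del; split; auto.
Qed.

Hypothesis Hl : locally_arcwise_connected tY.

Lemma local_arc_ball y eps : 0 < eps -> exists V del, open tY V /\ V y /\ 0 < del /\
  (forall z, V z -> d y z < eps) /\ (forall z, d y z < del -> V z) /\ arcwise_connected_set tY V.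
Proof.
  intros He. destruct (Hl y (fun z => d y z < eps) (ball_open _ _)) as [V [HV [Vy [Hsub Harc]]]].
  { rewrite d_refl; auto. }
  destruct (proj1 (HdY V) HV y Vy) as [del [Hdel Hball]].
  exists V, del. repeat split; auto.
Qed.

Lemma in_V_path V a b : arcwise_connected_set tY V -> V a -> V b ->
  exists g, ispath g /\ g 0 = a /\ g 1 = b /\ forall t, 0 <= t <= 1 -> V (g t).
Proof.
  intros HV Va Vb. destruct (classic (a = b)) as [<-|Hne].
  - exists (fun _ => a). repeat split; auto. apply ispath_const.
  - destruct (HV a b Va Vb Hne) as [g [Ha [E0 [E1 Hin]]]].
    exists g; repeat split; auto. apply arc_path; auto.
Qed.

Lemma local_path y : exists del, 0 < del /\ forall z, d y z < del ->
  exists g, ispath g /\ g 0 = y /\ g 1 = z.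
Proof.
  destruct (local_arc_ball y 1 ltac:(lra)) as [V [del [HV [Vy [Hdel [_ [Hb Harc]]]]]]].
  exists del; split; auto. intros z Hz.
  destruct (in_V_path V y z Harc Vy (Hb z Hz)) as [g [? [? [? _]]]]. eauto.
Qed.

Hypothesis Hc : connected tY.

Lemma path_connected a b : exists g, ispath g /\ g 0 = a /\ g 1 = b.
Proof.
  set (S := fun z => exists g, ispath g /\ g 0 = a /\ g 1 = z).
  apply NNPP; intro Hb. change (~ S b) in Hb.
  apply (Hc S (fun z => ~ S z)).
  - apply HdY. intros z [g [Hg [Ha Hz]]]. destruct (local_path z) as [del [Hdel H]].
    exists del; split; auto. intros w Hw. destruct (H w Hw) as [g' [Hg' [H0 H1]]].
    exists (pconcat g g'). split; [apply ispath_concat; auto; congruence|].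
    rewrite pconcat_0, pconcat_1; auto.
  - apply HdY. intros z Hz. destruct (local_path z) as [del [Hdel H]].
    exists del; split; auto. intros w Hw [g [Hg [Ha Hwg]]].
    destruct (H w Hw) as [g' [Hg' [H0 H1]]]. apply Hz.
    exists (pconcat g (prev g')). split.
    + apply ispath_concat; auto. apply ispath_rev; auto. unfold prev. rewrite Rminus_0_r. congruence.
    + rewrite pconcat_0, pconcat_1. unfold prev. rewrite Rminus_diag. auto.
  - intros y; apply classic.
  - intros y [? ?]; auto.
  - exists a, (fun _ => a). split; auto. apply ispath_const.
  - exists b; auto.
Qed.
End Paths.

Section Main.
Variables X Y : Type.
Variable tX : topology X.
Variable d : Y -> Y -> R.
Hypothesis Hd : is_metric d.
Variable f : X -> Y.
Variable y0 : Y.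
Variable I : Type.
Variable A : I -> X -> Prop.
Variable J : nat -> I -> Prop.
Variable U : forall m, {i | J m i} -> X -> Prop.
Hypothesis HUdisc : forall m, discrete_family tX (U m).
Variable g : I -> X -> R.
Hypothesis Hgc : forall i, continuous_R tX (g i).
Hypothesis Hgb : forall i x, 0 <= g i x <= 1.
Hypothesis HgA : forall i x, A i x <-> g i x = 0.
Variable h : forall m, {i | J m i} -> X -> R.
Hypothesis Hhc : forall m p, continuous_R tX (h m p).
Hypothesis Hhb : forall m p x, 0 <= h m p x <= 1.
Hypothesis HhU : forall m p x, U m p x <-> h m p x <> 0.
Hypothesis HAU : forall m p x, A (proj1_sig p) x -> U m p x.

Lemma prod_pos a b : 0 <= a -> 0 <= b -> 0 < a * b -> 0 < a /\ 0 < b.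
Proof.
  intros Ha Hb H. split; destruct (Rle_lt_dec a 0); destruct (Rle_lt_dec b 0); auto; nra.
Qed.

Definition small (l : nat) (i : I) :=
  forall u v, A i u -> A i v -> d (f u) (f v) < / (INR l + 1).

Lemma U_unique m p q x : U m p x -> U m q x -> p = q.
Proof.
  intros Hp Hq. destruct (HUdisc m x) as [W [_ [Wx HW]]]. apply HW; eauto.
Qed.

Definition phi (N : nat) m (p : {i | J m i}) x :=
  clamp (INR N * h m p x) * (1 - g (proj1_sig p) x).

Lemma phi_bounds N m p x : 0 <= phi N m p x <= 1.
Proof.
  unfold phi. pose proof (clamp_bounds (INR N * h m p x)). pose proof (Hgb (proj1_sig p) x). nra.
Qed.

Lemma phi_cont N m p : continuous_R tX (phi N m p).
Proof.
  apply cont_mul01.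
  - apply (cont_lip _ tX (h m p) (fun t => clamp (INR N * t)) (INR N)); [apply Hhc|apply pos_INR|].
    intros a b. eapply Rle_trans; [apply clamp_lip|].
    replace (INR N * a - INR N * b) with (INR N * (a - b)) by ring.
    rewrite Rabs_mult, (Rabs_pos_eq (INR N)) by apply pos_INR. lra.
  - apply (cont_lip _ tX (g (proj1_sig p)) (fun t => 1 - t) 1); [apply Hgc|lra|].
    intros a b. replace (1 - a - (1 - b)) with (- (a - b)) by ring. rewrite Rabs_Ropp; lra.
  - intro; apply clamp_bounds.
  - intro x. pose proof (Hgb (proj1_sig p) x); lra.
Qed.

Lemma phi_pos N m p x : 0 < phi N m p x -> U m p x.
Proof.
  unfold phi; intro H. apply HhU. intro E. rewrite E, Rmult_0_r in H.
  rewrite clamp_zero in H; lra.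
Qed.

Lemma phi_out N m p x : ~ U m p x -> phi N m p x = 0.
Proof.
  intro H. pose proof (phi_bounds N m p x). destruct (Rle_lt_dec (phi N m p x) 0). lra.
  exfalso; apply H; eapply phi_pos; eauto.
Qed.

Lemma phi_le N m p x : phi N m p x <= 1 - g (proj1_sig p) x.
Proof.
  unfold phi. pose proof (clamp_bounds (INR N * h m p x)). pose proof (Hgb (proj1_sig p) x). nra.
Qed.

Lemma phi_one N m p x : A (proj1_sig p) x -> 1 <= INR N * h m p x -> phi N m p x = 1.
Proof.
  intros HA Hn. unfold phi. rewrite clamp_one by auto.
  rewrite (proj1 (HgA _ x) HA). ring.
Qed.

Definition Theta (N l m : nat) (x : X) : R :=
  match excluded_middle_informative (exists p : {i | J m i}, U m p x /\ small l (proj1_sig p)) with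
  | left H => phi N m (proj1_sig (constructive_indefinite_description _ H)) x
  | right _ => 0
  end.

Lemma Theta_eq N l m p x : U m p x -> small l (proj1_sig p) -> Theta N l m x = phi N m p x.
Proof.
  intros Hu Hs. unfold Theta. destruct excluded_middle_informative as [H|H].
  - destruct (constructive_indefinite_description _ H) as [q Hq]; simpl; destruct Hq as [Hq Hq2].
    rewrite (U_unique m q p x); auto.
  - exfalso; eauto.
Qed.

Lemma Theta_zero N l m x : (forall p : {i | J m i}, small l (proj1_sig p) -> ~ U m p x) -> Theta N l m x = 0.
Proof.
  intros H. unfold Theta. destruct excluded_middle_informative as [[p [Hp Hs]]|]; auto.
  exfalso; eapply H; eauto.
Qed.

Lemma Theta_bounds N l m x : 0 <= Theta N l m x <= 1.
Proof.
  unfold Theta. destruct excluded_middle_informative; [apply phi_bounds|lra].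
Qed.

Lemma Theta_cont N l m : continuous_R tX (Theta N l m).
Proof.
  apply cont_local. intro x. destruct (HUdisc m x) as [W [HW [Wx HWd]]].
  exists W; split; auto; split; auto.
  destruct (classic (exists p : {i | J m i}, small l (proj1_sig p) /\ exists z, W z /\ U m p z))
    as [[p [Hs Hz]]|Hno].
  - exists (phi N m p). split; [apply phi_cont|]. intros z Wz.
    destruct (classic (U m p z)) as [Hu|Hu].
    + apply Theta_eq; auto.
    + rewrite phi_out by auto. apply Theta_zero. intros q Hq Hqz.
      assert (q = p) as -> by (apply HWd; eauto). auto.
  - exists (fun _ => 0). split; [apply cont_const|]. intros z Wz.
    apply Theta_zero. intros q Hq Hqz. apply Hno; eauto.
Qed.

Fixpoint Exc (N l m : nat) (x : X) : R :=
  match m with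
  | O => 1
  | S m' => Exc N l m' x * Ex N (Theta N l m' x)
  end.

Lemma Exc_bounds N l m x : 0 <= Exc N l m x <= 1.
Proof.
  induction m; simpl; [lra|]. pose proof (clamp_bounds (INR N * (1 - Theta N l m x) - 2)).
  unfold Ex. nra.
Qed.

Lemma Ex_cont N l m : continuous_R tX (fun x => Ex N (Theta N l m x)).
Proof.
  apply cont_lip with (L := Rabs (- INR N)); [apply Theta_cont|apply Rabs_pos|apply Ex_lip].
Qed.

Lemma Exc_cont N l m : continuous_R tX (Exc N l m).
Proof.
  induction m; simpl; [apply cont_const|].
  apply cont_mul01; auto; [apply Ex_cont| intro; apply Exc_bounds| intro; apply clamp_bounds].
Qed.

Lemma Exc_pos N l m x : 0 < Exc N l m x -> forall m', (m' < m)%nat -> 0 < Ex N (Theta N l m' x).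
Proof.
  induction m; simpl; intros H m' Hm'; [lia|].
  pose proof (Exc_bounds N l m x). pose proof (clamp_bounds (INR N * (1 - Theta N l m x) - 2)).
  unfold Ex in *.
  assert (0 < Exc N l m x /\ 0 < clamp (INR N * (1 - Theta N l m x) - 2)) as [K1 K2].
  { apply prod_pos; auto; lra. }
  destruct (Nat.eq_dec m' m) as [->|]; auto. apply IHm; auto; lia.
Qed.

Lemma Exc_one N l m x : (forall m', (m' < m)%nat -> Ex N (Theta N l m' x) = 1) -> Exc N l m x = 1.
Proof.
  induction m; simpl; intros H; auto. rewrite IHm, H by (auto; intros; apply H; lia). ring.
Qed.

Definition piece := {m : nat & {i | J m i}}.

Definition sigma (N l : nat) (s : piece) (x : X) : R :=
  if ((l <? N)%nat && (projT1 s <=? N)%nat)%bool then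
    if excluded_middle_informative (small l (proj1_sig (projT2 s))) then
      Rmp N (phi N (projT1 s) (projT2 s) x) * Exc N l (projT1 s) x
    else 0
  else 0.

Lemma sigma_bounds N l s x : 0 <= sigma N l s x <= 1.
Proof.
  unfold sigma. destruct andb; [|lra]. destruct excluded_middle_informative; [|lra].
  pose proof (clamp_bounds (1 - INR N * (1 - phi N (projT1 s) (projT2 s) x))).
  pose proof (Exc_bounds N l (projT1 s) x). unfold Rmp. nra.
Qed.

Lemma sigma_cont N l s : continuous_R tX (sigma N l s).
Proof.
  unfold sigma. destruct andb; [|apply cont_const]. destruct excluded_middle_informative; [|apply cont_const].
  apply cont_mul01; [| apply Exc_cont | intro; apply clamp_bounds | intro; apply Exc_bounds].
  apply cont_lip with (L := Rabs (INR N)); [apply phi_cont|apply Rabs_pos|apply Rmp_lip].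
Qed.

Lemma sigma_pos N l s x : 0 < sigma N l s x ->
  (l < N)%nat /\ (projT1 s <= N)%nat /\ small l (proj1_sig (projT2 s)) /\
  1 - / INR N < phi N (projT1 s) (projT2 s) x /\ 0 < Exc N l (projT1 s) x.
Proof.
  unfold sigma. destruct andb eqn:E; [|lra]. apply andb_prop in E as [E1 E2].
  apply Nat.ltb_lt in E1. apply Nat.leb_le in E2.
  destruct excluded_middle_informative as [Hs|]; [|lra]. intro H.
  pose proof (clamp_bounds (1 - INR N * (1 - phi N (projT1 s) (projT2 s) x))).
  pose proof (Exc_bounds N l (projT1 s) x). unfold Rmp in *.
  assert (0 < clamp (1 - INR N * (1 - phi N (projT1 s) (projT2 s) x)) /\ 0 < Exc N l (projT1 s) x)
    as [K1 K2].
  { apply prod_pos; auto; lra. }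
  apply clamp_pos in K1. repeat split; auto.
  assert (0 < INR N) by (apply lt_0_INR; lia).
  assert (INR N * (1 - phi N (projT1 s) (projT2 s) x) < 1) by lra.
  assert (1 - phi N (projT1 s) (projT2 s) x < / INR N); [|lra].
  apply Rmult_lt_reg_l with (INR N); auto. rewrite Rinv_r; lra.
Qed.
Lemma Ex_pos_lt N t : (0 < N)%nat -> 0 < Ex N t -> t < 1 - 2 * / INR N.
Proof.
  intros HN H. unfold Ex in H. apply clamp_pos in H.
  assert (0 < INR N) by (apply lt_0_INR; lia).
  assert (1 - t > 2 * / INR N); [|lra].
  apply Rmult_lt_reg_l with (INR N); auto.
  rewrite <- Rmult_assoc, (Rmult_comm (INR N) 2), Rmult_assoc, Rinv_r; lra.
Qed.

Lemma sigma_disc N l x : exists W, open tX W /\ W x /\ forall s1 s2 : piece,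
  (exists z, W z /\ 0 < sigma N l s1 z) -> (exists z, W z /\ 0 < sigma N l s2 z) -> s1 = s2.
Proof.
  destruct N as [|N'].
  { exists (fun _ => True). split; [apply open_full|]. split; auto.
    intros s1 s2 [z [_ Hz]]. apply sigma_pos in Hz; auto. lia. }
  set (N := S N').
  assert (HN : 0 < INR N) by (apply lt_0_INR; unfold N; lia).
  assert (HN1 : 1 <= INR N) by (unfold N; rewrite S_INR; pose proof (pos_INR N'); lra).
  set (a := / INR N). assert (Ha : 0 < a) by (apply Rinv_0_lt_compat; auto).
  assert (Ha1 : a <= 1) by (unfold a; rewrite <- Rinv_1; apply Rinv_le_contravar; lra).
  destruct (fin_nbhd tX x (fun k W =>
     (forall p q, (exists z, W z /\ U k p z) -> (exists z, W z /\ U k q z) -> p = q) /\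
     (forall z, W z -> Rabs (Theta N l k z - Theta N l k x) < a / 2)) (S N)) as [W [HW [Wx HQ]]].
  { intros k _. destruct (HUdisc k x) as [W1 [HW1 [W1x H1]]].
    destruct (Theta_cont N l k x (a/2) ltac:(lra))
      as [W2 [HW2 [W2x H2]]].
    exists (fun z => W1 z /\ W2 z). split; [apply open_inter; auto|]. split; auto.
    split.
    - intros p q [z1 [[? ?] ?]] [z2 [[? ?] ?]]. apply H1; eauto.
    - intros z [_ ?]; auto. }
  exists W. split; auto. split; auto.
  intros [m1 p1] [m2 p2] [z1 [W1 S1]] [z2 [W2 S2]].
  apply sigma_pos in S1; auto. apply sigma_pos in S2; auto. simpl in *.
  destruct S1 as [_ [Hm1 [Hs1 [Hp1 He1]]]]. destruct S2 as [_ [Hm2 [Hs2 [Hp2 He2]]]].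
  fold a in Hp1, Hp2.
  assert (U1 : U m1 p1 z1).
  { apply (phi_pos N). lra. }
  assert (U2 : U m2 p2 z2).
  { apply (phi_pos N). lra. }
  destruct (Compare_dec.lt_eq_lt_dec m1 m2) as [[Hlt|Heq]|Hgt].
  - exfalso.
    destruct (HQ m1 ltac:(lia)) as [W' [[_ Hc] HWW']].
    pose proof (Hc z1 (HWW' z1 W1)). pose proof (Hc z2 (HWW' z2 W2)).
    rewrite (Theta_eq N l m1 p1 z1 U1 Hs1) in *.
    pose proof (Exc_pos N l m2 z2 He2 m1 Hlt).
    apply Ex_pos_lt in H1; [|unfold N; lia]. replace (/ INR N) with a in H1 by reflexivity.
    unfold Rabs in *; repeat destruct Rcase_abs; lra.
  - subst m2. f_equal. destruct (HQ m1 ltac:(lia)) as [W' [[Hd' _] HWW']].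
    apply Hd'; eauto.
  - exfalso.
    destruct (HQ m2 ltac:(lia)) as [W' [[_ Hc] HWW']].
    pose proof (Hc z1 (HWW' z1 W1)). pose proof (Hc z2 (HWW' z2 W2)).
    rewrite (Theta_eq N l m2 p2 z2 U2 Hs2) in *.
    pose proof (Exc_pos N l m1 z1 He1 m2 Hgt).
    apply Ex_pos_lt in H1; [|unfold N; lia]. replace (/ INR N) with a in H1 by reflexivity.
    unfold Rabs in *; repeat destruct Rcase_abs; lra.
Qed.

Definition node := list piece.

Fixpoint PP (N e : nat) (n : node) (x : X) : R :=
  match n with
  | nil => 1
  | s :: n' => Rd e (sigma N (length n') s x) * PP N e n' x
  end.

Definition psi N (n : node) x := PP N (length n) n x.

Lemma PP_bounds N e n x : 0 <= PP N e n x <= 1.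
Proof.
  induction n; simpl; [lra|]. pose proof (clamp_bounds ((sigma N (length n) a x - (1 - / (INR e + 1))) *
     ((INR e + 1) * (INR e + 2)))). unfold Rd. nra.
Qed.

Lemma PP_cont N e n : continuous_R tX (PP N e n).
Proof.
  induction n; simpl; [apply cont_const|].
  apply cont_mul01; auto; [| intro; apply clamp_bounds | intro; apply PP_bounds].
  apply cont_lip with (L := Rabs ((INR e + 1) * (INR e + 2))); [apply sigma_cont|apply Rabs_pos|apply Rd_lip].
Qed.

Lemma PP_pos_cons N e s n x : 0 < PP N e (s :: n) x -> 0 < sigma N (length n) s x /\ 0 < PP N e n x.
Proof.
  simpl; intro H. apply prod_pos in H; [|apply clamp_bounds|apply PP_bounds].
  destruct H as [H1 H2]. split; auto. eapply Rd_pos0; eauto.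
Qed.

Lemma PP_nest N e n x : 0 < PP N (S e) n x -> PP N e n x = 1.
Proof.
  induction n; simpl; intro H; auto.
  apply prod_pos in H; [|apply clamp_bounds|apply PP_bounds]. destruct H as [H1 H2].
  rewrite (Rd_nest e _ H1), IHn; auto; ring.
Qed.

Lemma psi_nest N s n x : 0 < psi N (s :: n) x -> psi N n x = 1.
Proof.
  unfold psi; simpl. intro H. apply prod_pos in H; [|apply clamp_bounds|apply PP_bounds].
  apply PP_nest; tauto.
Qed.

Lemma psi_anc N r n x : 0 < psi N (r ++ n) x -> 0 < psi N n x.
Proof.
  induction r; simpl; auto. intro H. apply IHr. rewrite (psi_nest N a (r ++ n) x H). lra.
Qed.

Lemma psi_bounds N n x : 0 <= psi N n x <= 1.
Proof. apply PP_bounds. Qed.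

Lemma psi_cont N n : continuous_R tX (psi N n).
Proof. apply PP_cont. Qed.

Lemma psi_nil N x : psi N nil x = 1.
Proof. reflexivity. Qed.

Lemma psi_zero N n x : (N < length n)%nat -> psi N n x = 0.
Proof.
  intro H. destruct n as [|s n]; simpl in H; [lia|].
  destruct (Rle_lt_dec (psi N (s :: n) x) 0). { pose proof (psi_bounds N (s::n) x); lra. }
  unfold psi in r. apply PP_pos_cons in r as [r _]. apply sigma_pos in r. lia.
Qed.

Lemma node_disc N x : exists W, open tX W /\ W x /\ forall n1 n2 : node, length n1 = length n2 ->
  (exists z, W z /\ 0 < psi N n1 z) -> (exists z, W z /\ 0 < psi N n2 z) -> n1 = n2.
Proof.
  destruct (fin_nbhd tX x (fun k W => forall s1 s2 : piece,
    (exists z, W z /\ 0 < sigma N k s1 z) -> (exists z, W z /\ 0 < sigma N k s2 z) -> s1 = s2) N)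
    as [W [HW [Wx HQ]]].
  { intros k _. apply sigma_disc. }
  exists W; split; auto; split; auto.
  assert (forall n1 n2 e1 e2, length n1 = length n2 ->
    (exists z, W z /\ 0 < PP N e1 n1 z) -> (exists z, W z /\ 0 < PP N e2 n2 z) -> n1 = n2) as Hgen.
  { induction n1 as [|s1 n1 IH]; intros [|s2 n2] e1 e2 Hl H1 H2; simpl in Hl; try lia; auto.
    destruct H1 as [z1 [W1 P1]]. destruct H2 as [z2 [W2 P2]].
    apply PP_pos_cons in P1 as [S1 P1]. apply PP_pos_cons in P2 as [S2 P2].
    assert (Hlt : (length n1 < N)%nat) by (apply sigma_pos in S1; tauto).
    destruct (HQ (length n1) Hlt) as [W' [HQ' HWW]].
    f_equal.
    - apply HQ'; [exists z1|exists z2]; split; auto. replace (length n1) with (length n2) by lia; auto.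
    - apply (IH n2 e1 e2); [lia| exists z1 | exists z2]; auto. }
  intros n1 n2 Hl H1 H2. apply (Hgen n1 n2 (length n1) (length n2)); auto.
Qed.

Lemma node_unique N x n1 n2 : length n1 = length n2 -> 0 < psi N n1 x -> 0 < psi N n2 x -> n1 = n2.
Proof.
  intros Hl H1 H2. destruct (node_disc N x) as [W [_ [Wx HW]]]. apply HW; eauto.
Qed.

Lemma pos_suffix N x n n2 : 0 < psi N n x -> 0 < psi N n2 x -> (length n <= length n2)%nat ->
  exists r, n2 = r ++ n.
Proof.
  intros H1 H2 Hl.
  set (k := (length n2 - length n)%nat).
  exists (firstn k n2).
  assert (E : n2 = firstn k n2 ++ skipn k n2) by (symmetry; apply firstn_skipn).
  assert (Hs : skipn k n2 = n).
  { apply (node_unique N x).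
    - rewrite length_skipn. unfold k; lia.
    - apply (psi_anc N (firstn k n2)). rewrite <- E; auto.
    - auto. }
  rewrite Hs in E. auto.
Qed.

Definition deepest N n x := 0 < psi N n x /\ forall s, ~ 0 < psi N (s :: n) x.

Lemma deepest_exists N x : exists n, deepest N n x.
Proof.
  apply NNPP; intro Hno.
  assert (forall k, exists n, length n = k /\ 0 < psi N n x) as Hk.
  { induction k.
    - exists nil; split; auto. rewrite psi_nil; lra.
    - destruct IHk as [n [Hl Hp]].
      destruct (classic (exists s, 0 < psi N (s :: n) x)) as [[s Hs]|Hn].
      + exists (s :: n); split; simpl; auto.
      + exfalso; apply Hno; exists n; split; auto. intros s Hs; apply Hn; eauto. }
  destruct (Hk (S N)) as [n [Hl Hp]]. rewrite psi_zero in Hp; [lra|lia].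
Qed.

Lemma deepest_above N x n n2 : deepest N n x -> 0 < psi N n2 x -> (length n <= length n2)%nat -> n2 = n.
Proof.
  intros [H1 H3] H2 Hl. destruct (pos_suffix N x n n2 H1 H2 Hl) as [r ->].
  destruct r as [|s r] using rev_ind; auto.
  exfalso. apply (H3 s). rewrite <- app_assoc in H2. simpl in H2.
  apply (psi_anc N r); auto.
Qed.

Lemma deepest_unique N x n1 n2 : deepest N n1 x -> deepest N n2 x -> n1 = n2.
Proof.
  intros H1 H2. destruct (Nat.le_ge_cases (length n1) (length n2)).
  - symmetry. apply (deepest_above N x n1 n2); auto. apply H2.
  - apply (deepest_above N x n2 n1); auto. apply H1.
Qed.

Hypothesis Hpc : forall a b : Y, exists gm, ispath Y d gm /\ gm 0 = a /\ gm 1 = b.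

Definition inPiece (l : nat) (s : piece) (x : X) :=
  A (proj1_sig (projT2 s)) x /\ small l (proj1_sig (projT2 s)) /\
  forall m', (m' < projT1 s)%nat -> forall p' : {i | J m' i}, small l (proj1_sig p') -> ~ A (proj1_sig p') x.

Fixpoint inNode (n : node) (x : X) : Prop :=
  match n with
  | nil => True
  | s :: n' => inPiece (length n') s x /\ inNode n' x
  end.

Fixpoint anc (n : node) : Y :=
  match n with
  | nil => y0
  | s :: n' =>
    match excluded_middle_informative (exists z, inNode (s :: n') z) with
    | left H => f (proj1_sig (constructive_indefinite_description _ H))
    | right _ => anc n'
    end
  end.

Definition etan (n : node) := / (INR (length n) + 1).

Lemma etan_pos n : 0 < etan n.
Proof. unfold etan. apply Rinv_0_lt_compat. pose proof (pos_INR (length n)); lra. Qed.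

Definition Pth (n : node) : R -> Y :=
  match n with
  | nil => fun _ => y0
  | s :: n' => optpath Y d (anc n') (anc (s :: n')) (etan n')
  end.

Lemma Pth_opt s n : optimal Y d (anc n) (anc (s :: n)) (etan n) (Pth (s :: n)).
Proof. apply optpath_spec; auto. apply etan_pos. Qed.

Lemma Pth_path n : ispath Y d (Pth n).
Proof. destruct n as [|s n]; [apply ispath_const; auto|apply (proj1 (Pth_opt s n))]. Qed.

Lemma Pth_1 n : Pth n 1 = anc n.
Proof. destruct n as [|s n]; auto. apply (proj1 (proj2 (proj2 (Pth_opt s n)))). Qed.

Lemma Pth_0 s n : Pth (s :: n) 0 = anc n.
Proof. apply (proj1 (proj2 (Pth_opt s n))). Qed.

Definition fN (N : nat) (x : X) : Y :=
  let n := proj1_sig (constructive_indefinite_description _ (deepest_exists N x)) in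
  Pth n (psi N n x).

Lemma fN_char N n x : deepest N n x -> fN N x = Pth n (psi N n x).
Proof.
  intro H. unfold fN. destruct (constructive_indefinite_description _ _) as [n' Hn']; simpl.
  rewrite (deepest_unique N x n' n); auto.
Qed.

Lemma fN_cont_metric N x eps : 0 < eps ->
  exists W, open tX W /\ W x /\ forall z, W z -> d (fN N x) (fN N z) < eps.
Proof.
  intro He.
  destruct (deepest_exists N x) as [n0 Hn0].
  rewrite (fN_char N n0 x Hn0).
  destruct (node_disc N x) as [W0 [HW0 [W0x HD]]].
  set (t0 := psi N n0 x).
  assert (Ht0 : 0 < t0 <= 1) by (split; [apply Hn0|apply psi_bounds]).
  destruct (Pth_path n0 t0 ltac:(lra) eps He) as [d1 [Hd1 K1]].
  destruct (Rlt_le_dec t0 1) as [Hlt|Hge].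
  - destruct (psi_cont N n0 x (Rmin d1 (Rmin t0 (1 - t0)))) as [W1 [HW1 [W1x K2]]].
    { repeat apply Rmin_glb_lt; lra. }
    exists (fun z => W0 z /\ W1 z). split; [apply open_inter; auto|]. split; auto.
    intros z [Z0 Z1]. specialize (K2 z Z1).
    pose proof (Rmin_l d1 (Rmin t0 (1 - t0))). pose proof (Rmin_r d1 (Rmin t0 (1 - t0))).
    pose proof (Rmin_l t0 (1 - t0)). pose proof (Rmin_r t0 (1 - t0)).
    fold t0 in K2.
    assert (Hdz : deepest N n0 z).
    { split. { unfold Rabs in K2; destruct Rcase_abs in K2; lra. }
      intros s Hs. apply psi_nest in Hs. unfold Rabs in K2; destruct Rcase_abs in K2; lra. }
    rewrite (fN_char N n0 z Hdz). apply K1; [apply psi_bounds|].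
    eapply Rlt_le_trans; eauto.
  - assert (Et0 : t0 = 1) by lra. rewrite Et0 in *.
    destruct (classic (exists s, exists z, W0 z /\ 0 < psi N (s :: n0) z)) as [[s Hs]|Hno].
    + destruct (Pth_path (s :: n0) 0 ltac:(lra) eps He) as [d2 [Hd2 K3]].
      rewrite Pth_0, <- (Pth_1 n0) in K3.
      destruct (psi_cont N n0 x (Rmin d1 (1/2))) as [W1 [HW1 [W1x K2]]].
      { apply Rmin_glb_lt; lra. }
      destruct (psi_cont N (s :: n0) x (Rmin d2 (1/2))) as [W2 [HW2 [W2x K4]]].
      { apply Rmin_glb_lt; lra. }
      assert (Hc0 : psi N (s :: n0) x = 0).
      { pose proof (psi_bounds N (s :: n0) x). destruct Hn0 as [_ Hn0].
        specialize (Hn0 s). lra. }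
      exists (fun z => W0 z /\ W1 z /\ W2 z).
      split; [apply open_inter; auto; apply open_inter; auto|]. split; auto.
      intros z [Z0 [Z1 Z2]]. specialize (K2 z Z1). specialize (K4 z Z2).
      pose proof (Rmin_l d1 (1/2)). pose proof (Rmin_r d1 (1/2)).
      pose proof (Rmin_l d2 (1/2)). pose proof (Rmin_r d2 (1/2)).
      fold t0 in K2. rewrite Et0 in K2. rewrite Hc0 in K4.
      assert (Pn0 : 0 < psi N n0 z) by (unfold Rabs in K2; destruct Rcase_abs in K2; lra).
      destruct (Rlt_le_dec 0 (psi N (s :: n0) z)) as [Pc|Pc].
      * assert (Hdz : deepest N (s :: n0) z).
        { split; auto. intros s' Hs'. apply psi_nest in Hs'.
          unfold Rabs in K4; destruct Rcase_abs in K4; lra. }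
        rewrite (fN_char N _ z Hdz). apply K3; [apply psi_bounds|].
        eapply Rlt_le_trans; [apply K4|]. lra.
      * assert (Hdz : deepest N n0 z).
        { split; auto. intros s' Hs'.
          assert (s' :: n0 = s :: n0) as E.
          { apply HD; [reflexivity | exists z; split; auto | destruct Hs as [z' [? ?]]; exists z'; split; auto]. }
          rewrite E in Hs'. lra. }
        rewrite (fN_char N _ z Hdz). apply K1; [apply psi_bounds|].
        eapply Rlt_le_trans; [apply K2|]. lra.
    + destruct (psi_cont N n0 x (Rmin d1 (1/2))) as [W1 [HW1 [W1x K2]]].
      { apply Rmin_glb_lt; lra. }
      exists (fun z => W0 z /\ W1 z). split; [apply open_inter; auto|]. split; auto.
      intros z [Z0 Z1]. specialize (K2 z Z1).
      pose proof (Rmin_l d1 (1/2)). pose proof (Rmin_r d1 (1/2)).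
      fold t0 in K2. rewrite Et0 in K2.
      assert (Hdz : deepest N n0 z).
      { split; [unfold Rabs in K2; destruct Rcase_abs in K2; lra|].
        intros s' Hs'. apply Hno. exists s', z; auto. }
      rewrite (fN_char N _ z Hdz). apply K1; [apply psi_bounds|].
      eapply Rlt_le_trans; [apply K2|]. lra.
Qed.

Hypothesis Hcover : forall x l, exists i, A i x /\ small l i.
Hypothesis HJ : forall i, exists m, J m i.
Hypothesis Hloc : forall y eps, 0 < eps -> exists del, 0 < del /\ forall a b, d y a < del -> d y b < del ->
  exists gm, ispath Y d gm /\ gm 0 = a /\ gm 1 = b /\ forall t, 0 <= t <= 1 -> d y (gm t) < eps.

Lemma arch r : exists N, r < INR N.
Proof.
  destruct (INR_archimed 1 r ltac:(lra)) as [n Hn]. exists n; lra.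
Qed.

Lemma least_exists (P : nat -> Prop) : (exists n, P n) -> exists n, P n /\ forall k, (k < n)%nat -> ~ P k.
Proof.
  intros [n Hn]. revert Hn. induction n as [n IH] using (well_founded_induction Wf_nat.lt_wf). intro Hn.
  destruct (classic (exists k, (k < n)%nat /\ P k)) as [[k [Hk Pk]]|Hno].
  - apply (IH k Hk Pk).
  - exists n; split; auto. intros k Hk Pk; apply Hno; eauto.
Qed.

Lemma eventually_all (m : nat) (P : nat -> nat -> Prop) :
  (forall k, (k < m)%nat -> exists N0, forall N, (N0 <= N)%nat -> P k N) ->
  exists N0, forall N, (N0 <= N)%nat -> forall k, (k < m)%nat -> P k N.
Proof.
  induction m; intros H.
  - exists O; intros; lia.
  - destruct IHm as [N1 H1]. { intros k Hk; apply H; lia. }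
    destruct (H m ltac:(lia)) as [N2 H2].
    exists (N1 + N2)%nat. intros N HN k Hk.
    destruct (Nat.eq_dec k m) as [->|]; [apply H2; lia|apply H1; lia].
Qed.

Lemma piece_exists x l : exists s, inPiece l s x.
Proof.
  destruct (Hcover x l) as [i [Hi Hs]]. destruct (HJ i) as [m Hm].
  destruct (least_exists (fun m => exists p : {i | J m i}, small l (proj1_sig p) /\ A (proj1_sig p) x))
    as [m0 [[p [Hps Hpa]] Hmin]].
  { exists m, (exist _ i Hm); auto. }
  exists (existT _ m0 p). split; auto. split; auto. simpl.
  intros m' Hm' p' Hs' Ha'. apply (Hmin m' Hm'). eauto.
Qed.

Definition pc l x := proj1_sig (constructive_indefinite_description _ (piece_exists x l)).
Lemma pc_spec l x : inPiece l (pc l x) x.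
Proof. exact (proj2_sig (constructive_indefinite_description _ (piece_exists x l))). Qed.

Fixpoint chain (e : nat) (x : X) : node :=
  match e with O => nil | S e' => pc e' x :: chain e' x end.

Lemma chain_length e x : length (chain e x) = e.
Proof. induction e; simpl; auto. Qed.

Lemma chain_in e x : inNode (chain e x) x.
Proof. induction e; simpl; auto. rewrite chain_length. split; auto. apply pc_spec. Qed.

Lemma sigma_ev l s x : inPiece l s x -> exists N0, forall N, (N0 <= N)%nat -> sigma N l s x = 1.
Proof.
  destruct s as [m p]. intros [Ha [Hs Hmin]]. simpl in *.
  assert (Hu : U m p x) by (apply HAU; auto).
  assert (Hh : 0 < h m p x) by (pose proof (Hhb m p x); pose proof (proj1 (HhU m p x) Hu); lra).
  destruct (arch (/ h m p x)) as [N1 HN1].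
  assert (Hth : forall m', (m' < m)%nat -> exists c, 0 < c /\ forall N, Theta N l m' x <= 1 - c).
  { intros m' Hm'.
    destruct (classic (exists p' : {i | J m' i}, U m' p' x /\ small l (proj1_sig p'))) as [[p' [Hu' Hs']]|Hno].
    - exists (g (proj1_sig p') x). split.
      + pose proof (Hgb (proj1_sig p') x). destruct (Rle_lt_dec (g (proj1_sig p') x) 0); auto.
        exfalso. apply (Hmin m' Hm' p' Hs'). apply HgA; lra.
      + intro N. rewrite (Theta_eq N l m' p' x Hu' Hs'). pose proof (phi_le N m' p' x). lra.
    - exists 1. split; [lra|]. intro N. rewrite Theta_zero; [lra|]. intros p' Hs' Hu'. apply Hno; eauto. }
  destruct (eventually_all m (fun k N => Ex N (Theta N l k x) = 1)) as [N2 HN2].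
  { intros k Hk. destruct (Hth k Hk) as [c [Hc Hle]].
    destruct (arch (3 / c)) as [N3 HN3]. exists N3. intros N HN.
    unfold Ex. apply clamp_one. specialize (Hle N).
    assert (INR N3 <= INR N) by (apply le_INR; auto).
    assert (3 <= INR N * c); [|nra].
    assert (3 / c * c = 3) by (field; lra). nra. }
  exists (S l + m + N1 + N2)%nat. intros N HN. unfold sigma. simpl projT1; simpl projT2.
  replace ((l <? N)%nat && (m <=? N)%nat)%bool with true.
  2:{ symmetry. apply andb_true_intro; split; [apply Nat.ltb_lt|apply Nat.leb_le]; lia. }
  destruct excluded_middle_informative as [_|]; [|contradiction].
  rewrite Exc_one by (intros; apply HN2; auto; lia).
  rewrite phi_one; auto.
  - unfold Rmp. rewrite clamp_one; [ring|]. lra.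
  - assert (INR N1 <= INR N) by (apply le_INR; lia).
    assert (/ h m p x * h m p x = 1) by (field; lra). nra.
Qed.

Lemma PP_chain_one N e D x : (forall l, (l < D)%nat -> sigma N l (pc l x) x = 1) -> PP N e (chain D x) x = 1.
Proof.
  induction D; simpl; intros H; auto. rewrite chain_length, H, IHD, Rd_one; [ring| |lia].
  intros; apply H; lia.
Qed.

Lemma psi_chain_ev D x : exists N0, forall N, (N0 <= N)%nat -> psi N (chain D x) x = 1.
Proof.
  destruct (eventually_all D (fun l N => sigma N l (pc l x) x = 1)) as [N0 H].
  { intros l _. apply sigma_ev, pc_spec. }
  exists N0. intros N HN. apply PP_chain_one. intros; apply H; auto.
Qed.

Lemma inNode_app r n z : inNode (r ++ n) z -> inNode n z.
Proof. induction r; simpl; auto. tauto. Qed.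

Lemma anc_in r s n : (exists z, inNode (s :: n) z) -> exists z, inNode (s :: n) z /\ anc (r ++ s :: n) = f z.
Proof.
  intros Hex. induction r as [|s' r IH]; simpl.
  - destruct excluded_middle_informative as [H|H]; [|contradiction].
    exists (proj1_sig (constructive_indefinite_description _ H)). split; auto.
    exact (proj2_sig (constructive_indefinite_description _ H)).
  - destruct excluded_middle_informative as [H|H]; auto.
    exists (proj1_sig (constructive_indefinite_description _ H)). split; auto.
    exact (inNode_app r (s :: n) _ (proj2 (proj2_sig (constructive_indefinite_description _ H)))).
Qed.

Lemma chain_diam D x z : inNode (chain (S D) x) z -> d (f x) (f z) < / (INR D + 1).
Proof.
  simpl. rewrite chain_length. intros [[Ha [Hs _]] _].
  destruct (pc_spec D x) as [Ha' _]. apply Hs; auto.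
Qed.

Lemma fN_conv x eps : 0 < eps -> exists N0, forall N, (N0 <= N)%nat -> d (f x) (fN N x) < eps.
Proof.
  intro He. set (y := f x).
  destruct (Hloc y (eps/4) ltac:(lra)) as [del0 [Hdel0 Hpath]].
  set (del := Rmin del0 (eps/4)).
  assert (Hdel : 0 < del) by (apply Rmin_glb_lt; lra).
  assert (Hdle : del <= eps/4) by apply Rmin_r.
  assert (Hdle0 : del <= del0) by apply Rmin_l.
  destruct (arch (/ del)) as [D HD].
  assert (HDd : / (INR D + 1) < del).
  { pose proof (pos_INR D).
    assert (/ del < INR D + 1) by lra.
    replace del with (/ / del) by (field; lra). apply Rinv_lt_contravar; auto.
    apply Rmult_lt_0_compat; [apply Rinv_0_lt_compat|]; lra. }
  set (c := chain (S D) x).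
  assert (Hanc : forall r, d y (anc (r ++ c)) < del).
  { intro r. unfold c; simpl. destruct (anc_in r (pc D x) (chain D x)) as [z [Hz E]].
    { exists x. apply (chain_in (S D)). }
    rewrite E. unfold y. apply Rlt_trans with (/ (INR D + 1)); auto.
    apply (chain_diam D x z). exact Hz. }
  destruct (psi_chain_ev (S D) x) as [N0 HN0].
  exists N0. intros N HN. specialize (HN0 N HN). fold c in HN0.
  destruct (deepest_exists N x) as [n Hn]. rewrite (fN_char N n x Hn).
  destruct (Nat.le_gt_cases (length n) (length c)) as [Hle|Hgt].
  - assert (c = n) as <-.
    { apply (deepest_above N x n c Hn); auto. lra. }
    rewrite HN0, Pth_1. pose proof (Hanc nil) as K. change (d y (anc c) < del) in K. change (f x) with y. lra.
  - assert (Pc : 0 < psi N c x) by (rewrite HN0; lra).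
    assert (Hl' : (length c <= length n)%nat) by lia.
    destruct (pos_suffix N x c n Pc (proj1 Hn) Hl') as [r ->].
    destruct r as [|s r]; [simpl in Hgt; lia|].
    simpl app. set (t := psi N (s :: r ++ c) x).
    assert (Ht : 0 <= t <= 1) by apply psi_bounds.
    destruct (Pth_opt s (r ++ c)) as [_ [_ [_ Hopt]]].
    pose proof (Hanc r) as Ka. pose proof (Hanc (s :: r)) as Kb. simpl app in Kb.
    destruct (Hpath (anc (r ++ c)) (anc (s :: r ++ c))) as [gm [Hgm [G0 [G1 Gin]]]];
      [lra|lra|].
    assert (Hw : within Y d (anc (r ++ c)) gm (del + eps / 4)).
    { intros u Hu. specialize (Gin u Hu). pose proof (d_tri Y d Hd (anc (r ++ c)) y (gm u)) as T1.
      rewrite (d_sym Y d Hd (anc (r ++ c)) y) in T1. lra. }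
    specialize (Hopt gm _ Hgm G0 G1 Hw t Ht).
    assert (Heta : etan (r ++ c) <= / (INR D + 1)).
    { unfold etan. apply Rinv_le_contravar; [pose proof (pos_INR D); lra|].
      assert (INR D <= INR (length (r ++ c))); [|lra].
      apply le_INR. rewrite length_app. unfold c. rewrite chain_length. lia. }
    pose proof (d_tri Y d Hd y (anc (r ++ c)) (Pth (s :: r ++ c) t)). lra.
Qed.
End Main.

Theorem mainTheorem6 (X Y : Type) (tX : topology X) (tY : topology Y)
  (HYm : metrizable tY) (HYc : connected tY) (HYl : locally_arcwise_connected tY) :
  forall f : X -> Y, Sigma0fstar tX tY f -> Baire1 tX tY f.
Proof.
  intros f [I [A [HA [[J [HJ Hsfd]] Hbase]]]].
  destruct HYm as [d [Hd HdY]].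
  destruct (classic (exists x : X, True)) as [Hne|Hemp].
  2:{ exists (fun _ => f). split.
      - intros n V HV. apply (open_ext tX (fun _ => True)); [apply open_full|].
        intro x; exfalso; apply Hemp; eauto.
      - intros x; exfalso; apply Hemp; eauto. }
  destruct Hne as [x0 _]. set (y0 := f x0).
  set (U := fun m => proj1_sig (constructive_indefinite_description _ (Hsfd m))).
  assert (HU : forall m, (forall p, functionally_open tX (U m p)) /\ discrete_family tX (U m) /\
    (forall p, subset (closure tX (A (proj1_sig p))) (U m p))).
  { intro m. exact (proj2_sig (constructive_indefinite_description _ (Hsfd m))). }
  set (g := fun i => proj1_sig (constructive_indefinite_description _ (HA i))).
  assert (Hg : forall i, continuous_R tX (g i) /\ (forall x, 0 <= g i x <= 1) /\ (forall x, A i x <-> g i x = 0)).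
  { intro i. exact (proj2_sig (constructive_indefinite_description _ (HA i))). }
  set (h := fun m p => proj1_sig (constructive_indefinite_description _ (proj1 (HU m) p))).
  assert (Hh : forall m p, continuous_R tX (h m p) /\ (forall x, 0 <= h m p x <= 1) /\
     (forall x, ~ U m p x <-> h m p x = 0)).
  { intros m p. exact (proj2_sig (constructive_indefinite_description _ (proj1 (HU m) p))). }
  assert (HhU : forall m p x, U m p x <-> h m p x <> 0).
  { intros m p x. destruct (Hh m p) as [_ [_ E]]. specialize (E x). split.
    - intros Hu Hz. apply (proj2 E Hz Hu).
    - intros Hz. apply NNPP. intro Hu. apply Hz, E, Hu. }
  assert (HAU : forall m p x, A (proj1_sig p) x -> U m p x).
  { intros m p x Ha. apply (proj2 (proj2 (HU m)) p). intros W _ Wx. exists x; auto. }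
  assert (Hcover : forall x l, exists i, A i x /\ small X Y d f I A l i).
  { intros x l. set (r := / (2 * (INR l + 1))).
    assert (Hr : 0 < r) by (unfold r; apply Rinv_0_lt_compat; pose proof (pos_INR l); lra).
    destruct (Hbase (fun z => d (f x) z < r) (ball_open Y d Hd tY HdY (f x) r)) as [K HK].
    destruct (proj1 (HK x)) as [i [Ki Ai]]. { rewrite d_refl; auto. }
    exists i; split; auto. intros u v Au Av.
    assert (Hu : d (f x) (f u) < r) by (apply HK; eauto).
    assert (Hv : d (f x) (f v) < r) by (apply HK; eauto).
    pose proof (d_tri Y d Hd (f u) (f x) (f v)). rewrite (d_sym Y d Hd (f u) (f x)) in H.
    assert (r + r = / (INR l + 1)) by (unfold r; field; pose proof (pos_INR l); lra). lra. }
  assert (Hpc := path_connected Y d Hd tY HdY HYl HYc).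
  assert (Hloc : forall y eps, 0 < eps -> exists del, 0 < del /\ forall a b, d y a < del -> d y b < del ->
    exists gm, ispath Y d gm /\ gm 0 = a /\ gm 1 = b /\ forall t, 0 <= t <= 1 -> d y (gm t) < eps).
  { intros y eps He. destruct (local_arc_ball Y d Hd tY HdY HYl y eps He) as [V [del [_ [_ [Hdel [HV1 [HV2 Harc]]]]]]].
    exists del; split; auto. intros a b Ha Hb.
    destruct (in_V_path Y d Hd tY HdY V a b Harc (HV2 a Ha) (HV2 b Hb)) as [gm [G1 [G2 [G3 G4]]]].
    exists gm; repeat split; auto. }
  assert (HUd : forall m, discrete_family tX (U m)) by (intro m; apply HU).
  assert (Hgc : forall i, continuous_R tX (g i)) by (intro; apply Hg).
  assert (Hgb : forall i x, 0 <= g i x <= 1) by (intro; apply Hg).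
  assert (HgA : forall i x, A i x <-> g i x = 0) by (intro; apply Hg).
  assert (Hhc : forall m p, continuous_R tX (h m p)) by (intros; apply Hh).
  assert (Hhb : forall m p x, 0 <= h m p x <= 1) by (intros; apply Hh).
  exists (fN X Y d f y0 I A J U g h). split.
  - intros N V HV. apply open_local. intros x Vx.
    destruct (proj1 (HdY V) HV _ Vx) as [eps [He Heps]].
    destruct (fN_cont_metric X Y tX d Hd f y0 I A J U HUd g Hgc Hgb h Hhc HhU Hpc N x eps He)
      as [W [HW [Wx HWc]]].
    exists W; repeat split; auto.
  - intros x V HV Vx.
    destruct (proj1 (HdY V) HV _ Vx) as [eps [He Heps]].
    destruct (fN_conv X Y tX d Hd f y0 I A J U HUd g Hgc Hgb HgA h Hhc Hhb HhU HAU Hpc Hcover HJ Hloc x eps He)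
      as [N0 HN0].
    exists N0. intros n Hn. apply Heps, HN0. lia.
Qed.
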